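(* Let $s$ be a Nash equilibrium in an $n$-resource selection game $G=\bigl((f_j)_{j=1}^n;(\mu^{R})_{\emptyset\ne R\subseteq[n]}\bigr)$, and let $P^s=\arg\max_{j\in[n]}h^s_j$ (the set of all maximizers). Then: (a) $P^s=P_G$; (b) $h^s_j=h_G$ for every $j\in P^s$; (c) $s_j(R)=0$ for every nonempty $R\subseteq[n]$ with $R\not\subseteq P^s$ and every $j\in P^s$; (d) if $P^s\ne[n]$, the map $s'$ defined for nonempty $R'\subseteq[n]\setminus P^s$ and $j\in[n]\setminus P^s$ by $s'_j(R')=\sum_{R:\,R\setminus P^s=R'}s_j(R)$ is a Nash equilibrium of the game $G-P^s$, and $h^{s'}_j=h^s_j$ for every $j\in[n]\setminus P^s$.
   Context: An $n$-resource selection game is $G=\bigl((f_j)_{j=1}^n;(\mu^{R})_{\emptyset\ne R\subseteq[n]}\bigr)$ with each $f_j:[0,\infty)\to\mathbb{R}$ nondecreasing and each $\mu^R\ge0$. A consumption profile assigns to each nonempty $R$ a vector $s(R)\in[0,\infty)^{[n]}$ with $s_j(R)=0$ for $j\notin R$ and $\sum_j s_j(R)=\mu^R$; loads $\mu^s_j=\sum_R s_j(R)$, costs $h^s_j=f_j(\mu^s_j)$; $s$ is a Nash equilibrium if for every $R$, every $k$ with $s_k(R)>0$ and every $j\in R$, $h^s_k\le h^s_j$. Equalization: for nondecreasing $g_1,\ldots,g_m:[0,\infty)\to\mathbb{R}\cup\{\mathrm{undefined}\}$, $\mathrm{eq}(g_1,\ldots,g_m)(\mu)=g_1(\mu_1)$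 if there exist $\mu_1,\ldots,\mu_m\ge0$ summing to $\mu$ with $g_1(\mu_1)=\cdots=g_m(\mu_m)\in\mathbb{R}$, else $\mathrm{undefined}$. For nonempty $S\subseteq[n]$: $E_G(S)=\mathrm{eq}(f_k:k\in S)\bigl(\sum_{\emptyset\ne R\subseteq S}\mu^R\bigr)$; $M_G(S)$ is the set of nonempty $S'\subseteq S$ such that for every $0\le\mu\le\sum_{R\subseteq S,\,R\cap S'\ne\emptyset}\mu^R$, $\mathrm{eq}(f_k:k\in S')(\mu)\ne E_G(S)$ ($\mathrm{undefined}$ differs from every real); $D_G=\{S: E_G(S)\in\mathbb{R},\ M_G(S)=\emptyset\}$; $h_G=\max_{S\in D_G}E_G(S)$; $P_G=\bigcup\{S\in D_G:E_G(S)=h_G\}$. Resource removal: for $S\subsetneq[n]$, $G-S$ is the $|[n]\setminus S|$-resource selection game with resources $[n]\setminus S$, cost functions $(f_j)_{j\notin S}$, and mass $\sum_{R:\,R\setminus S=R'}\mu^R$ for each nonempty $R'\subseteq[n]\setminus S$. *)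

(* Defs.v *)
From HB Require Import structures.
From mathcomp Require Import all_boot all_order all_algebra.
Set Implicit Arguments. Unset Strict Implicit. Unset Printing Implicit Defensive.
Import Order.TTheory GRing.Theory Num.Theory.
Local Open Scope ring_scope.

Section ResourceSelection.
Variable R : realFieldType.
Variable T : finType.

Definition nondecr (g : R -> R) : Prop :=
  forall x y, 0 <= x -> x <= y -> g x <= g y.

(* Games are given by cost functions f : T -> R -> R and masses
   mu : {set T} -> R (mass mu R for coalition R).  A game on a ground set
   U : {set T} only uses coalitions that are nonempty subsets of U. *)

Definition is_profile (U : {set T}) (mu : {set T} -> R)
    (s : {set T} -> T -> R) : Prop :=
  forall Rc : {set T}, Rc \subset U -> Rc != set0 ->
    [/\ (forall j, j \in U -> 0 <= s Rc j),
        (forall j, j \in U -> j \notin Rc -> s Rc j = 0)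
      & \sum_(j in U) s Rc j = mu Rc].

Definition load (U : {set T}) (s : {set T} -> T -> R) (j : T) : R :=
  \sum_(Rc : {set T} | (Rc \subset U) && (Rc != set0)) s Rc j.

Definition cost (U : {set T}) (f : T -> R -> R) (s : {set T} -> T -> R)
    (j : T) : R := f j (load U s j).

Definition is_nash (U : {set T}) (f : T -> R -> R) (mu : {set T} -> R)
    (s : {set T} -> T -> R) : Prop :=
  is_profile U mu s /\
  forall Rc : {set T}, Rc \subset U -> Rc != set0 ->
    forall k j, k \in U -> j \in Rc -> 0 < s Rc k ->
      cost U f s k <= cost U f s j.

(* eq(f_k : k in S)(m) = v  (S nonempty); the value is unique when the
   f_k are nondecreasing, so this relation is the graph of eq. *)
Definition is_eq (f : T -> R -> R) (S : {set T}) (m v : R) : Prop :=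
  exists x : T -> R,
    [/\ (forall k, k \in S -> 0 <= x k),
        \sum_(k in S) x k = m
      & (forall k, k \in S -> f k (x k) = v)].

Definition mass_within (mu : {set T} -> R) (S : {set T}) : R :=
  \sum_(Rc : {set T} | (Rc != set0) && (Rc \subset S)) mu Rc.

Definition mass_meeting (mu : {set T} -> R) (S S' : {set T}) : R :=
  \sum_(Rc : {set T} | (Rc \subset S) && (Rc :&: S' != set0)) mu Rc.

Definition E_is (f : T -> R -> R) (mu : {set T} -> R) (S : {set T}) (v : R)
  : Prop := is_eq f S (mass_within mu S) v.

(* S in D_G with E_G(S) = v : E_G(S) = v is real and M_G(S) is empty,
   i.e. no nonempty S' subset of S belongs to M_G(S). *)
Definition in_D (f : T -> R -> R) (mu : {set T} -> R) (S : {set T}) (v : R)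
  : Prop :=
  E_is f mu S v /\
  forall S' : {set T}, S' != set0 -> S' \subset S ->
    exists m, [/\ 0 <= m, m <= mass_meeting mu S S' & is_eq f S' m v].

Definition is_hG (f : T -> R -> R) (mu : {set T} -> R) (h : R) : Prop :=
  (exists S : {set T}, S != set0 /\ in_D f mu S h) /\
  forall (S : {set T}) v, S != set0 -> in_D f mu S v -> v <= h.

Definition in_PG (f : T -> R -> R) (mu : {set T} -> R) (h : R) (j : T)
  : Prop :=
  exists S : {set T}, [/\ S != set0, in_D f mu S h & j \in S].

Definition argmax_set (f : T -> R -> R) (s : {set T} -> T -> R) : {set T} :=
  [set j | [forall i, cost [set: T] f s i <= cost [set: T] f s j]].

Definition remove_mass (mu : {set T} -> R) (P : {set T}) (R' : {set T}) : R :=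
  \sum_(Rc : {set T} | (Rc != set0) && (Rc :\: P == R')) mu Rc.

Definition remove_prof (s : {set T} -> T -> R) (P : {set T})
    (R' : {set T}) (j : T) : R :=
  \sum_(Rc : {set T} | (Rc != set0) && (Rc :\: P == R')) s Rc j.

End ResourceSelection.

(* Main.v *)
Require Import Defs.
From HB Require Import structures.
From mathcomp Require Import all_boot all_order all_algebra.
Import Order.TTheory GRing.Theory Num.Theory.
Local Open Scope ring_scope.
Lemma sum_sub_le (R : numDomainType) (I : finType) (P Q : pred I) (F : I -> R) :
  (forall i, P i -> Q i) -> (forall i, Q i -> ~~ P i -> 0 <= F i) ->
  \sum_(i | P i) F i <= \sum_(i | Q i) F i.
Proof.
move=> PQ F0; rewrite [X in _ <= X](bigID P) /=.
rewrite (eq_bigl P) ?lerDl ?sumr_ge0 //.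
- by move=> i /andP [hQ hP]; apply: F0.
- by move=> i; apply/andP/idP => [[]//|h]; split=> //; apply: PQ.
Qed.

Lemma sum_pos_ex (R : realDomainType) (I : finType) (P : pred I) (F : I -> R) :
  0 < \sum_(i | P i) F i -> exists i, P i /\ 0 < F i.
Proof.
move=> h; case: (boolP [exists i, P i && (0 < F i)]) => [/existsP [i /andP [? ?]]|/existsPn hn].
  by exists i.
have : \sum_(i | P i) F i <= 0.
  by apply: sumr_le0 => i hi; move: (hn i); rewrite hi /= -leNgt.
by rewrite leNgt h.
Qed.

Lemma sum_lt_ex (R : numDomainType) (I : finType) (P : pred I) (F G : I -> R) i0 :
  P i0 -> (forall i, P i -> F i < G i) -> \sum_(i | P i) F i < \sum_(i | P i) G i.
Proof.
move=> h0 h; apply: ltr_sum => //; apply/hasP; exists i0 => //; exact: mem_index_enum.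
Qed.

Theorem mainTheorem14 (R : realFieldType) (n : nat) (hn : (0 < n)%N)
    (f : 'I_n -> R -> R) (mu : {set 'I_n} -> R) (s : {set 'I_n} -> 'I_n -> R)
    (hf : forall j, nondecr (f j))
    (hmu : forall Rc : {set 'I_n}, Rc != set0 -> 0 <= mu Rc)
    (hs : is_nash [set: 'I_n] f mu s) :
  let Ps := argmax_set f s in
  [/\ (* (a) and (b) *)
      (exists h, [/\ is_hG f mu h,
                     (forall j, j \in Ps <-> in_PG f mu h j)
                   & (forall j, j \in Ps -> cost [set: 'I_n] f s j = h)]),
      (* (c) *)
      (forall Rc : {set 'I_n}, Rc != set0 -> ~~ (Rc \subset Ps) ->
         forall j, j \in Ps -> s Rc j = 0)
    & (* (d) *)
      (Ps != [set: 'I_n] ->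
         is_nash (~: Ps) f (remove_mass mu Ps) (remove_prof s Ps) /\
         (forall j, j \in ~: Ps ->
            cost (~: Ps) f (remove_prof s Ps) j = cost [set: 'I_n] f s j))].
Proof.
move=> Ps.
case: hs => hprof hnash.
have sge0 : forall Rc j, Rc != set0 -> 0 <= s Rc j.
  by move=> Rc j hR; case: (hprof Rc (subsetT _) hR) => + _ _; apply; rewrite in_setT.
have sout : forall Rc j, Rc != set0 -> j \notin Rc -> s Rc j = 0.
  by move=> Rc j hR hj; case: (hprof Rc (subsetT _) hR) => _ + _; apply; rewrite ?in_setT.
have ssum : forall Rc, Rc != set0 -> \sum_j s Rc j = mu Rc.
  move=> Rc hR; case: (hprof Rc (subsetT _) hR) => _ _ <-.
  by apply: eq_bigl => j; rewrite in_setT.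
pose c j := cost [set: 'I_n] f s j.
have nash : forall Rc k j, Rc != set0 -> j \in Rc -> 0 < s Rc k -> c k <= c j.
  by move=> Rc k j hR hj hk; apply: (hnash Rc (subsetT _) hR) => //; rewrite in_setT.
pose j0 := [arg max_(i > Ordinal hn) c i]%O.
have cmax : forall i, c i <= c j0.
  by rewrite /j0; case: arg_maxP => //= i _ Hi i'; exact: Hi.
pose H := c j0.
have inPs : forall j, (j \in Ps) = (c j == H).
  move=> j; rewrite /Ps /argmax_set inE; apply/forallP/eqP.
  - by move=> hj; apply/le_anti; rewrite cmax hj.
  - by move=> hj i; have := cmax i; rewrite -/H -hj; apply.
have notPs : forall j, j \notin Ps -> c j < H.
  by move=> j; rewrite inPs lt_neqAle cmax andbT.
have loadE : forall j, load [set: 'I_n] s j = \sum_(Rc | Rc != set0) s Rc j.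
  by move=> j; rewrite /load; apply: eq_bigl => Rc; rewrite subsetT.
have load0 : forall j, 0 <= load [set: 'I_n] s j.
  by move=> j; rewrite loadE; apply: sumr_ge0 => Rc hR; apply: sge0.
have swap : forall A : {set 'I_n}, \sum_(k in A) load [set: 'I_n] s k
    = \sum_(Rc | Rc != set0) \sum_(k in A) s Rc k.
  by move=> A; under eq_bigr do rewrite loadE; exact: exchange_big.
have summu : forall Rc (A : {set 'I_n}), Rc != set0 ->
    (forall k, k \notin A -> s Rc k = 0) -> \sum_(k in A) s Rc k = mu Rc.
  move=> Rc A hR hA; rewrite -(ssum Rc hR) [RHS](bigID (mem A)) /=.
  by rewrite [X in _ = _ + X]big1 ?addr0 // => k /hA.
have hc : forall Rc, Rc != set0 -> ~~ (Rc \subset Ps) -> forall j, j \in Ps -> s Rc j = 0.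
  move=> Rc hR /subsetPn [i hiR hiP] j hj.
  have := sge0 Rc j hR; rewrite le_eqVlt => /orP [/eqP <- //|hpos].
  have hle := nash Rc j i hR hiR hpos.
  have hcj : c j = H by apply/eqP; rewrite -inPs.
  by move: (le_lt_trans hle (notPs i hiP)); rewrite hcj ltxx.

have PsN : Ps != set0 by apply/set0Pn; exists j0; rewrite inPs.
have ub : forall (S : {set 'I_n}) v, S != set0 -> in_D f mu S v -> v <= H.
  move=> S v /set0Pn [j1 hj1] [[x [x0 xsum xv]] _].
  rewrite leNgt; apply/negP => hvH.
  have hlt : forall k, k \in S -> load [set: 'I_n] s k < x k.
    move=> k hk; rewrite ltNge; apply/negP => hle.
    have := hf k _ _ (x0 k hk) hle.
    rewrite xv // => hv.
    have : v <= H := le_trans hv (cmax k).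
    by rewrite leNgt hvH.
  have hmass : mass_within mu S <= \sum_(Rc | Rc != set0) \sum_(k in S) s Rc k.
    rewrite /mass_within (eq_bigr (fun Rc => \sum_(k in S) s Rc k)); last first.
      move=> Rc /andP [hR hRS]; symmetry; apply: summu => // k hk; apply: sout => //.
      by apply/negP => hkR; move/negP: hk; apply; exact: (subsetP hRS).
    apply: sum_sub_le => [Rc /andP []//| Rc hR _]; apply: sumr_ge0 => k _; exact: sge0.
  have := @sum_lt_ex _ _ (fun k => k \in S) _ _ j1 hj1 hlt.
  by rewrite swap xsum => /(le_lt_trans hmass); rewrite ltxx.
have inDPs : in_D f mu Ps H.
  split.
    exists (load [set: 'I_n] s); split.
    - by move=> k _; apply: load0.
    - rewrite swap /mass_within [LHS](bigID (fun Rc : {set 'I_n} => Rc \subset Ps)) /=.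
      rewrite [X in _ + X]big1 ?addr0.
        apply: eq_bigr => Rc /andP [hR hRP]; apply: summu => // k hk; apply: sout => //.
        by apply/negP => hkR; move/negP: hk; apply; exact: (subsetP hRP).
      by move=> Rc /andP [hR hRP]; apply: big1 => k hk; apply: hc.
    - by move=> k hk; move: hk; rewrite inPs => /eqP; apply.
  move=> S' hS' hS'P.
  exists (\sum_(k in S') load [set: 'I_n] s k); split.
  - by apply: sumr_ge0 => k _; apply: load0.
  - rewrite swap /mass_meeting.
    rewrite [X in X <= _](bigID (fun Rc : {set 'I_n} => (Rc \subset Ps) && (Rc :&: S' != set0))) /=.
    rewrite [X in _ + X]big1 ?addr0; last first.
      move=> Rc /andP [hR]; rewrite negb_and negbK => /orP [hRP | /eqP hI];
        apply: big1 => k hk.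
      - by apply: hc => //; exact: (subsetP hS'P).
      - apply: sout => //; apply/negP => hkR.
        have : k \in Rc :&: S' by rewrite in_setI hkR hk.
        by rewrite hI in_set0.
    rewrite [X in _ <= X](eq_bigl (fun Rc => (Rc != set0) && ((Rc \subset Ps) && (Rc :&: S' != set0)))); last first.
      move=> Rc; apply/idP/andP => [h|[]//]; split=> //.
      move: h => /andP [_ /set0Pn [k]]; rewrite in_setI => /andP [hk _].
      by apply/set0Pn; exists k.
    apply: ler_sum => Rc /andP [hR _]; rewrite -(ssum Rc hR).
    by apply: (@sum_sub_le _ _ (fun k => k \in S') xpredT) => // k _ _; exact: sge0.
  - exists (load [set: 'I_n] s); split => //.
    * by move=> k hk; move: (subsetP hS'P k hk); rewrite inPs => /eqP; apply.
split.
- exists H; split.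
  + by split; [exists Ps; split | exact: ub].
  + move=> j; split => [hj|]; first by exists Ps.
    case=> S [hS hD hjS]; apply/negPn/negP => hj.
    pose S' := S :\: Ps.
    have hjS' : j \in S' by rewrite in_setD hj hjS.
    have hS' : S' != set0 by apply/set0Pn; exists j.
    case: hD => _ /(_ S' hS' (subsetDl _ _)) [m [m0 mle [y [y0 ysum yv]]]].
    have hlt : forall k, k \in S' -> load [set: 'I_n] s k < y k.
      move=> k hk; rewrite ltNge; apply/negP => hle.
      have := hf k _ _ (y0 k hk) hle.
      rewrite yv // => hv.
      have hkP : k \notin Ps by move: hk; rewrite in_setD => /andP [].
      have : H < H := le_lt_trans hv (notPs k hkP).
      by rewrite ltxx.
    have hmm : mass_meeting mu S S' <= \sum_(Rc | Rc != set0) \sum_(k in S') s Rc k.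
      rewrite /mass_meeting (eq_bigr (fun Rc => \sum_(k in S') s Rc k)); last first.
        move=> Rc /andP [hRS /set0Pn [i]]; rewrite in_setI => /andP [hiR hiS'].
        have hR : Rc != set0 by apply/set0Pn; exists i.
        symmetry; apply: summu => // k hk.
        case: (boolP (k \in Rc)) => hkR; last by apply: sout.
        apply: hc => //.
        - apply/subsetPn; exists i => //; move: hiS'; rewrite in_setD => /andP [] //.
        - by move: hk; rewrite in_setD (subsetP hRS _ hkR) andbT negbK.
      apply: sum_sub_le => [Rc /andP [_ /set0Pn [i]] | Rc hR _].
        by rewrite in_setI => /andP [hiR _]; apply/set0Pn; exists i.
      by apply: sumr_ge0 => k _; exact: sge0.
    have := @sum_lt_ex _ _ (fun k => k \in S') _ _ j hjS' hlt.
    rewrite swap ysum => hlt2.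
    by move: (le_lt_trans (le_trans mle hmm) hlt2); rewrite ltxx.
  + by move=> j; rewrite inPs => /eqP.
- exact: hc.
move=> _.
have s'ge0 : forall R' j, 0 <= remove_prof s Ps R' j.
  by move=> R' j; apply: sumr_ge0 => Rc /andP [hR _]; apply: sge0.
have notsub : forall Rc R', R' != set0 -> Rc :\: Ps == R' -> ~~ (Rc \subset Ps).
  by move=> Rc R' hR' /eqP hD; rewrite -setD_eq0 hD.
have loadQ : forall j, j \in ~: Ps ->
    load (~: Ps) (remove_prof s Ps) j = load [set: 'I_n] s j.
  move=> j hj; rewrite loadE /load /remove_prof.
  rewrite [RHS](bigID (fun Rc : {set 'I_n} => Rc :\: Ps != set0)) /= [X in _ = _ + X]big1 ?addr0; last first.
    move=> Rc /andP [hR]; rewrite negbK setD_eq0 => hsub; apply: sout => //.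
    apply/negP => hjR; move: hj; rewrite in_setC => /negP; apply; exact: (subsetP hsub).
  rewrite [RHS](@partition_big _ _ _ _ _ _ (fun Rc : {set 'I_n} => (Rc != set0) && (Rc :\: Ps != set0))
     (fun Rc => Rc :\: Ps) (fun R' => (R' \subset ~: Ps) && (R' != set0))) /=; last first.
    move=> Rc /andP [_ hD]; rewrite hD andbT; apply/subsetP => k.
    by rewrite in_setD in_setC => /andP [].
  apply: eq_bigr => R' /andP [_ hR']; apply: eq_bigl => Rc.
  apply/andP/andP => [[h1 h2] | [/andP [h1 _] h2]]; split => //.
  by apply/andP; split => //; rewrite (eqP h2).
split; last by move=> j hj; rewrite /cost loadQ.
split.
  move=> R' hR'Q hR'; split.
  - by move=> j _; apply: s'ge0.
  - move=> j hj hjR'; apply: big1 => Rc /andP [hR /eqP hD]; apply: sout => //.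
    apply/negP => hjR; move/negP: hjR'; apply; rewrite -hD in_setD hjR andbT.
    by rewrite in_setC in hj.
  - rewrite /remove_prof /remove_mass exchange_big; apply: eq_bigr => Rc /andP [hR hD].
    apply: summu => // k; rewrite in_setC negbK => hk; apply: hc => //; exact: notsub hR' hD.
move=> R' hR'Q hR' k j hk hj hpos.
rewrite /cost loadQ // loadQ; last exact: (subsetP hR'Q).
rewrite /remove_prof in hpos.
have [Rc [/andP [hR /eqP hD] hpos']] := @sum_pos_ex _ _ _ _ hpos.
apply: (nash Rc k j hR _ hpos'); move: hj; rewrite -hD in_setD => /andP [] //.
Qed.
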